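(* For a finite rooted tree $T$, define for each vertex $v$ the polynomial $C_v(x)\in\mathbb{Z}[x]$ inductively by $C_v(x)=x+2$ if $v$ is a leaf, and $C_v(x)=x^{n_v}+2x\prod_{i=1}^{\deg(v)}C_{v_i}(x)+2$ if $v$ is internal, where $n_v$ is the number of vertices of the subtree $T_v$ rooted at $v$ and $v_1,\dots,v_{\deg(v)}$ are the children of $v$; set $C_T(x)=C_r(x)$ where $r$ is the root of $T$. Then $C_T$ is a complete invariant for rooted trees: for any two finite rooted trees $T$ and $T'$, $C_T(x)=C_{T'}(x)$ if and only if $T$ and $T'$ are isomorphic as rooted trees.
   Context: An isomorphism of rooted trees is a graph isomorphism mapping root to root. $T_v$ consists of $v$ and all its descendants. *)

(* Defs.v *)
From mathcomp Require Import all_boot all_order all_algebra.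
Set Implicit Arguments. Unset Strict Implicit. Unset Printing Implicit Defensive.
Import GRing.Theory.
Local Open Scope ring_scope.

(* Finite rooted trees: a root with a (finite) list of child subtrees.
   The order of the list is irrelevant for the notions below. *)
Inductive rtree : Type := Node of seq rtree.

Fixpoint rsize (t : rtree) : nat :=
  let: Node ts := t in
  (1 + (fix sz (l : seq rtree) : nat :=
          match l with [::] => 0 | c :: l' => rsize c + sz l' end) ts)%N.

Fixpoint Cpoly (t : rtree) : {poly int} :=
  match t with
  | Node [::] => 'X + 2%:P
  | Node ts =>
      'X^(rsize t)
      + 2%:P * 'X * (fix pr (l : seq rtree) : {poly int} :=
                        match l with [::] => 1 | c :: l' => Cpoly c * pr l' end) ts
      + 2%:P
  end.

(* Vertices of t are addressed by paths from the root: [::] is the root,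
   and i :: p is the vertex at address p in the i-th child subtree. *)
Fixpoint valid_pos (t : rtree) (p : seq nat) : bool :=
  match p with
  | [::] => true
  | i :: p' => let: Node ts := t in
               (i < size ts)%N && valid_pos (nth (Node [::]) ts i) p'
  end.

Definition adj (p q : seq nat) : Prop :=
  (exists i, q = rcons p i) \/ (exists i, p = rcons q i).

Definition rtree_iso (t u : rtree) : Prop :=
  exists (f g : seq nat -> seq nat),
    (forall p, valid_pos t p -> valid_pos u (f p) /\ g (f p) = p) /\
    (forall q, valid_pos u q -> valid_pos t (g q) /\ f (g q) = q) /\
    f [::] = [::] /\
    (forall p q, valid_pos t p -> valid_pos t q -> (adj p q <-> adj (f p) (f q))).

(* Main.v *)
Require Import Defs.
From mathcomp Require Import all_boot all_order all_algebra.
From mathcomp Require Import zify.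
Set Implicit Arguments. Unset Strict Implicit. Unset Printing Implicit Defensive.
Import GRing.Theory.
Local Open Scope ring_scope.

Lemma rsizeE ts : rsize (Node ts) = (sumn (map rsize ts)).+1.
Proof. by rewrite /= add1n; congr _.+1; elim: ts => //= c ts ->. Qed.

Lemma CprodE ts : (fix pr (l : seq rtree) : {poly int} :=
                        match l with [::] => 1 | c :: l' => Cpoly c * pr l' end) ts
   = \prod_(c <- ts) Cpoly c.
Proof. by elim: ts => [|c ts IH]; rewrite ?big_nil ?big_cons ?IH. Qed.

Lemma CpolyE c ts : Cpoly (Node (c :: ts)) =
  'X^(rsize (Node (c :: ts))) + 2%:P * 'X * \prod_(d <- c :: ts) Cpoly d + 2%:P.
Proof. by rewrite -CprodE. Qed.

Lemma Cleaf : Cpoly (Node [::]) = 'X + 2%:P.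
Proof. by []. Qed.

Definition pbar (p : {poly int}) : {poly 'F_2} := map_poly (intr : int -> 'F_2) p.

Lemma pbarD p q : pbar (p + q) = pbar p + pbar q.
Proof. exact: rmorphD. Qed.
Lemma pbarM p q : pbar (p * q) = pbar p * pbar q.
Proof. exact: rmorphM. Qed.
Lemma pbarX : pbar 'X = 'X.
Proof. exact: map_polyX. Qed.
Lemma pbarXn n : pbar 'X^n = 'X^n.
Proof. exact: map_polyXn. Qed.
Lemma pbar2 : pbar 2%:P = 0.
Proof. rewrite /pbar map_polyC -[RHS]polyC0; congr polyC; exact/val_inj. Qed.

Lemma pbar_C t : pbar (Cpoly t) = 'X^(rsize t).
Proof.
case: t => [[|c ts]].
  by rewrite Cleaf pbarD pbarX pbar2 addr0.
rewrite [Cpoly _]CpolyE.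
by rewrite !pbarD !pbarM pbarXn pbar2 !mul0r !addr0.
Qed.

Lemma In_rsize c ts : List.In c ts -> (rsize c <= sumn (map rsize ts))%N.
Proof. elim: ts => //= d ts IH [->|/IH]; lia. Qed.

Lemma rtree_ind' (P : rtree -> Prop) :
  (forall ts, (forall c, List.In c ts -> P c) -> P (Node ts)) -> forall t, P t.
Proof.
move=> H t; have [n] := ubnP (rsize t); elim: n t => // n IH [ts] Hs.
apply: H => c /In_rsize Hc; apply: IH; rewrite rsizeE in Hs; lia.
Qed.

Lemma size_C t : (size (Cpoly t) <= (rsize t).+1)%N.
Proof.
elim/rtree_ind': t => [[|c ts]] IH; first by rewrite Cleaf size_XaddC.
have Hp : forall l, (forall d, List.In d l -> List.In d (c :: ts)) ->
  (size (\prod_(d <- l) Cpoly d)%R <= (sumn (map rsize l)).+1)%N.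
  elim=> [|d l IHl] Hl; first by rewrite big_nil size_poly1.
  rewrite big_cons /=; apply: leq_trans (size_mul_leq _ _) _.
  have := IH d (Hl d (or_introl erefl)).
  have := IHl (fun e He => Hl e (or_intror He)). move=> h1 h2; have := leq_add h2 h1; move: (size _) (size _) h1 h2 => a b; rewrite -subn1; lia.
rewrite [Cpoly _]CpolyE !rsizeE.
apply: leq_trans (size_add _ _) _; rewrite geq_max size_polyC; apply/andP; split; last first.
  by case: (_ != 0).
apply: leq_trans (size_add _ _) _; rewrite geq_max size_polyXn leqnn /=.
apply: leq_trans (size_mul_leq _ _) _.
have := Hp (c :: ts) (fun d H => H).
have : (size (2%:P * 'X : {poly int})%R <= 2)%N.
  by apply: leq_trans (size_mul_leq _ _) _; rewrite size_polyX size_polyC; case: (_ != 0).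
move=> h1 h2; move: (size _) (size _) h1 h2 => a b /=; rewrite -subn1; lia.
Qed.

Definition Eis (p : {poly int}) n :=
  [/\ (0 < n)%N, pbar p = 'X^n, (size p <= n.+1)%N & p`_0 = 2].

Lemma Eis_C t : Eis (Cpoly t) (rsize t).
Proof.
split; [by case: t => ts; rewrite rsizeE | exact: pbar_C | exact: size_C |].
case: t => [[|c ts]]; first by rewrite Cleaf coefD coefX coefC.
rewrite [Cpoly _]CpolyE rsizeE !coefD coefXn -mulrA coef0M coef0M coefX coefC.
by rewrite /= mul0r mulr0 add0r.
Qed.

Lemma F2_eq0 (x : int) : ((x%:~R : 'F_2) == 0) = (2 %| `|x|)%N.
Proof.
case: x => n.
  by rewrite -val_eqE /= (val_Fp_nat (p:=2)).
by rewrite NegzE mulrNz oppr_eq0 -val_eqE /= (val_Fp_nat (p:=2)).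
Qed.

Lemma pbar_coef p i : (pbar p)`_i = (p`_i)%:~R.
Proof. by rewrite /pbar coef_map. Qed.

Lemma size_pbar p : (size (pbar p) <= size p)%N.
Proof. exact: size_poly. Qed.

Lemma eis_split_aux p n a b : Eis p n -> p = a * b ->
  ((b`_0)%:~R : 'F_2) != 0 -> size b = 1%N.
Proof.
move=> [n0 hb hs h0] E hb0.
have hab : pbar a * pbar b = 'X^n by rewrite -pbarM -E.
have cop : coprimep ('X^n) (pbar b).
  apply: coprimep_expl; rewrite coprimep_sym coprimepX /root horner_coef0 pbar_coef.
  exact: hb0.
have hdv : 'X^n %| pbar a by rewrite -(Gauss_dvdpl _ cop) hab dvdpp.
have pa0 : pbar a != 0.
  by apply/eqP => pz; move: hab; rewrite pz mul0r => hz; have := size_polyXn 'F_2 n; rewrite -hz size_poly0.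
have sa : (n.+1 <= size a)%N.
  rewrite -(size_polyXn 'F_2 n); apply: leq_trans (dvdp_leq pa0 hdv) (size_pbar a).
have a0 : a != 0 by apply: contraNneq pa0 => ->; rewrite /pbar map_poly0.
have b0 : b != 0.
  apply/negP => /eqP bz; move: hb0; by rewrite bz coef0 eqxx.
have := size_mul a0 b0; rewrite -E => sp.
have : (0 < size b)%N by rewrite size_poly_gt0.
move: sp hs sa; move: (size p) (size a) (size b) => x y z; lia.
Qed.

Lemma eis_split p n a b : Eis p n -> p = a * b -> size a = 1%N \/ size b = 1%N.
Proof.
move=> hE E.
have h0 : a`_0 * b`_0 = 2 by rewrite -coef0M -E; case: hE.
have [hb0|hb0] := eqVneq ((b`_0)%:~R : 'F_2) 0; last by right; apply: eis_split_aux hE E hb0.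
have [ha0|ha0] := eqVneq ((a`_0)%:~R : 'F_2) 0; last first.
  by left; apply: (eis_split_aux hE (etrans E (mulrC _ _)) ha0).
move: hb0 ha0 => /eqP hb0 /eqP ha0; rewrite F2_eq0 in hb0; rewrite F2_eq0 in ha0.
have := dvdn_mul ha0 hb0; rewrite -abszM h0 //.
Qed.

Lemma Eis_irr p n : Eis p n -> irreducible_poly p.
Proof.
move=> hE; have [n0 hb hs h0] := hE.
have p0 : p != 0 by apply/eqP => pz; move: h0; rewrite pz coef0.
split.
  apply: leq_trans (size_pbar p); rewrite hb size_polyXn; lia.
move=> q sq /dvdpP_int [r E].
have q0 : q != 0 by apply/eqP => qz; move: E; rewrite qz zprimitive0 mul0r; apply/eqP.
have [|sr] := eis_split hE E; first by rewrite size_zprimitive => h; rewrite h in sq.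
have er : r = (r`_0)%:P by apply: size1_polyC; rewrite sr.
have r0 : r`_0 != 0 by apply/eqP => rz; move: E; rewrite er rz mulr0; apply/eqP.
rewrite E er mulrC mul_polyC.
rewrite eqp_sym; apply: (eqp_trans (eqp_scale _ r0)); rewrite eqp_sym.
rewrite {1}[q]zpolyEprim; apply: eqp_scale; by rewrite zcontents_eq0.
Qed.

Lemma irr_dvd_prod (F : fieldType) (p : {poly F}) (s : seq {poly F}) :
  irreducible_poly p -> p %| \prod_(q <- s) q -> exists2 q, q \in s & p %| q.
Proof.
move=> ip; elim: s => [|q s IH].
  by rewrite big_nil dvdp1 => /eqP h; move: ip => [+ _]; rewrite h.
rewrite big_cons => hd.
have [g1|gp] := irredp_XsubCP ip (dvdp_gcdl p q).
  have cop : coprimep p q by rewrite /coprimep (eqp_size g1) size_poly1.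
  rewrite (Gauss_dvdpr _ cop) in hd.
  by have [r rs pr] := IH hd; exists r => //; rewrite inE rs orbT.
exists q; first by rewrite mem_head.
by rewrite -(eqp_dvdl _ gp) dvdp_gcdr.
Qed.

Lemma UF_rat (s1 s2 : seq {poly rat}) :
  (forall q, q \in s1 ++ s2 -> irreducible_poly q /\ q`_0 = 2) ->
  \prod_(q <- s1) q = \prod_(q <- s2) q -> perm_eq s1 s2.
Proof.
elim: s1 s2 => [|p s1 IH] s2 H E.
  case: s2 H E => [//|q s2] H; rewrite big_nil big_cons => E.
  have [iq _] := H q (mem_head _ _).
  have : q %| 1 by rewrite E dvdp_mulr.
  by rewrite dvdp1 => /eqP h; move: iq => [+ _]; rewrite h.
have [ip p2] := H p (mem_head _ _).
have : p %| \prod_(q <- s2) q by rewrite -E big_cons dvdp_mulr.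
move=> /(irr_dvd_prod ip) [q qs pq].
have [iq q2] : irreducible_poly q /\ q`_0 = 2 by apply: H; rewrite mem_cat qs orbT.
have epq : p %= q by apply: iq => //; case: ip => h _; rewrite neq_ltn h orbT.
have pe : p = q.
  move/eqpP: epq => [[c1 c2] /= /andP [c10 c20] ce].
  have : c1 * 2 = c2 * 2 by rewrite -[in LHS]p2 -[in RHS]q2 -!coefZ ce.
  move/(mulIf _) => h; rewrite h // in ce.
  exact: (scalerI c20).
subst q.
have Hr := perm_to_rem qs.
rewrite (perm_big _ Hr) /= !big_cons in E.
have p0 : p != 0 by apply: irredp_neq0.
have E' := mulfI p0 E.
apply: (@perm_trans _ (p :: rem p s2)); last by rewrite perm_sym.
rewrite perm_cons; apply: IH E'.
move=> r; rewrite mem_cat => /orP [rs|rr]; apply: H.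
  by rewrite /= inE mem_cat rs orbT.
by rewrite mem_cat (mem_rem rr) orbT.
Qed.

Local Notation pZtoQ := (map_poly (intr : int -> rat)).

Lemma UF_int (s1 s2 : seq {poly int}) :
  (forall q, q \in s1 ++ s2 -> exists n, Eis q n) ->
  \prod_(q <- s1) q = \prod_(q <- s2) q -> perm_eq s1 s2.
Proof.
move=> H E.
have inj : injective pZtoQ by apply: map_inj_poly; [exact: intr_inj | by []].
apply: (perm_map_inj inj); apply: UF_rat.
  move=> q; rewrite -map_cat => /mapP [q' q's ->].
  have [n hn] := H q' q's; split.
    by apply/irreducible_rat_int; apply: Eis_irr hn.
  by rewrite coef_map; case: hn => _ _ _ ->.
by rewrite !big_map -!rmorph_prod E.
Qed.

Notation ch ts i := (nth (Node [::]) ts i).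

Lemma valid_cons ts i p :
  valid_pos (Node ts) (i :: p) = (i < size ts)%N && valid_pos (ch ts i) p.
Proof. by []. Qed.

Lemma valid_rcons t p k : valid_pos t (rcons p k) -> valid_pos t p.
Proof.
elim: p t => [|i p IH] [ts] //= /andP [hi hv]; rewrite hi /=; exact: IH.
Qed.

Lemma rcons_cons' (i : nat) p k : rcons (i :: p) k = i :: rcons p k.
Proof. by []. Qed.

Lemma adj_sym p q : adj p q <-> adj q p.
Proof. by rewrite /adj; split => -[h|h]; [right|left|right|left]. Qed.

Lemma adj_cons i j p q : adj (i :: p) (j :: q) <-> i = j /\ adj p q.
Proof.
rewrite /adj; split.
  case=> -[k]; rewrite rcons_cons' => -[-> ->]; split=> //; [left|right]; by exists k.
case=> -> [] [k ->]; [left|right]; exists k; by rewrite rcons_cons'.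
Qed.

Lemma adj_nil_cons j q : adj [::] (j :: q) <-> q = [::].
Proof.
rewrite /adj; split.
  by case=> -[k]; [case: q => //= x q [_]; case: q | case: q => // x q; rewrite rcons_cons'].
move=> ->; left; by exists j.
Qed.

Lemma adj_cons_nil j q : adj (j :: q) [::] <-> q = [::].
Proof. by rewrite adj_sym adj_nil_cons. Qed.

Lemma adj_nil_nil : ~ adj [::] [::].
Proof. by rewrite /adj => -[] [k]; case. Qed.

Lemma adj_size p q : adj p q -> size q = (size p).+1 \/ size p = (size q).+1.
Proof. by case=> -[k ->]; rewrite size_rcons; [left|right]. Qed.

Definition isoP t u (f g : seq nat -> seq nat) :=
    (forall p, valid_pos t p -> valid_pos u (f p) /\ g (f p) = p) /\
    (forall q, valid_pos u q -> valid_pos t (g q) /\ f (g q) = q) /\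
    f [::] = [::] /\
    (forall p q, valid_pos t p -> valid_pos t q -> (adj p q <-> adj (f p) (f q))).

Lemma isoP_sym t u f g : isoP t u f g -> isoP u t g f.
Proof.
move=> [h1 [h2 [h3 h4]]]; split; first exact: h2; split; first exact: h1; split.
  by have [_ e] := h1 [::] isT; rewrite h3 in e.
move=> p q vp vq; have [vp' ep] := h2 p vp; have [vq' eq'] := h2 q vq.
by rewrite (h4 _ _ vp' vq') ep eq'.
Qed.

Lemma isoP_gnil t u f g : isoP t u f g -> g [::] = [::].
Proof. by move=> [h1 [_ [h3 _]]]; have [_ e] := h1 [::] isT; rewrite h3 in e. Qed.

Lemma rcons_eq_l (s1 s2 : seq nat) x1 x2 : rcons s1 x1 = rcons s2 x2 -> s1 = s2.
Proof. by move/rcons_inj => [->]. Qed.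

Lemma iso_size t u f g : isoP t u f g ->
  forall p, valid_pos t p -> size (f p) = size p.
Proof.
move=> [h1 [h2 [h3 h4]]] p; have [n] := ubnP (size p); elim: n p => // n IH p.
case/lastP: p => [|p k] hs vp; first by rewrite h3.
have vp' := valid_rcons vp.
rewrite size_rcons in hs *.
have IHp := IH p hs vp'.
have ha : adj p (rcons p k) by left; exists k.
case: ((h4 _ _ vp' vp).1 ha) => -[k1 E1]; first by rewrite E1 size_rcons IHp.
exfalso.
case/lastP: p hs vp' IHp ha E1 vp => [|p' k'] hs vp' IHp ha E1 vp.
  by move: E1; rewrite h3; case: (f _).
have vp'' := valid_rcons vp'.
have IHp' := IH p' ltac:(rewrite size_rcons in hs; lia) vp''.
have ha' : adj p' (rcons p' k') by left; exists k'.
case: ((h4 _ _ vp'' vp').1 ha') => -[k2 E2]; last first.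
  by move: (congr1 size E2); rewrite size_rcons IHp' IHp size_rcons; lia.
rewrite E2 in E1; move/rcons_eq_l: E1 => E.
have := (h1 _ vp'').2; rewrite E (h1 _ vp).2 => /(congr1 size).
rewrite !size_rcons; lia.
Qed.

Lemma iso_rcons t u f g : isoP t u f g -> forall p k, valid_pos t (rcons p k) ->
  exists k', f (rcons p k) = rcons (f p) k'.
Proof.
move=> hI p k vp; have vp' := valid_rcons vp.
have [h1 [h2 [h3 h4]]] := hI.
have ha : adj p (rcons p k) by left; exists k.
case: ((h4 _ _ vp' vp).1 ha) => -[k1 E1]; first by exists k1.
move: (congr1 size E1); rewrite size_rcons !(iso_size hI) // size_rcons; lia.
Qed.

Lemma iso_head t u f g : isoP t u f g -> forall i p, valid_pos t (i :: p) ->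
  exists q, f (i :: p) = head 0 (f [:: i]) :: q.
Proof.
move=> hI i p; elim/last_ind: p => [|p k IH] vp.
  have := iso_size hI vp; case: (f _) => // j [|//] _; by exists [::].
have [k' ->] := iso_rcons hI (vp : valid_pos t (rcons (i :: p) k)).
have [q ->] := IH (valid_rcons (vp : valid_pos t (rcons (i :: p) k))).
by exists (rcons q k').
Qed.

Definition sig_of (f : seq nat -> seq nat) i := head 0%N (f [:: i]).

Lemma iso_one ts us f g : isoP (Node ts) (Node us) f g -> forall i, (i < size ts)%N ->
  f [:: i] = [:: sig_of f i] /\ (sig_of f i < size us)%N.
Proof.
move=> hI i hi.
have vi : valid_pos (Node ts) [:: i] by rewrite /= hi; case: (ch ts i).
have [q Eq] := iso_head hI vi.
have := iso_size hI vi; rewrite Eq; case: q Eq => // Eq _.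
split; first by rewrite Eq.
by have [+ _] := hI.1 _ vi; rewrite Eq /= => /andP [].
Qed.

Lemma sig_inj ts us f g : isoP (Node ts) (Node us) f g -> forall i j,
  (i < size ts)%N -> (j < size ts)%N -> sig_of f i = sig_of f j -> i = j.
Proof.
move=> hI i j hi hj E.
have vi : valid_pos (Node ts) [:: i] by rewrite /= hi; case: (ch ts i).
have vj : valid_pos (Node ts) [:: j] by rewrite /= hj; case: (ch ts j).
have := (hI.1 _ vi).2; have := (hI.1 _ vj).2.
rewrite (iso_one hI hi).1 (iso_one hI hj).1 E => -> [] //.
Qed.

Lemma iso_hd ts us f g : isoP (Node ts) (Node us) f g -> forall i p,
  valid_pos (Node ts) (i :: p) -> f (i :: p) = sig_of f i :: behead (f (i :: p)).
Proof. by move=> hI i p vp; have [q ->] := iso_head hI vp. Qed.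

Lemma iso_child ts us f g : isoP (Node ts) (Node us) f g -> forall i, (i < size ts)%N ->
  isoP (ch ts i) (ch us (sig_of f i))
       (fun p => behead (f (i :: p))) (fun q => behead (g (sig_of f i :: q))).
Proof.
move=> hI i hi; have [h1 [h2 [h3 h4]]] := hI.
have [Ei si] := iso_one hI hi.
have fh : forall p, valid_pos (ch ts i) p -> f (i :: p) = sig_of f i :: behead (f (i :: p)).
  by move=> p vp; apply: (iso_hd hI); rewrite /= hi vp.
split.
  move=> p vp; have vip : valid_pos (Node ts) (i :: p) by rewrite /= hi vp.
  have [v e] := h1 _ vip; rewrite (fh _ vp) in v e.
  by move: v => /= /andP [_ ->]; rewrite e.
split.
  move=> q vq; have viq : valid_pos (Node us) (sig_of f i :: q) by rewrite /= si vq.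
  have [v e] := h2 _ viq.
  move: v e; case: (g _) => [|i' r] v e.
    by move: e; rewrite h3.
  have hi' : (i' < size ts)%N by move: v => /= /andP [].
  rewrite (iso_hd hI v) in e; case: e => e1 e2.
  have ii := sig_inj hI hi' hi e1; subst i'.
  by move: v => /= /andP [_ ->]; rewrite e2.
split; first by rewrite Ei.
move=> p q vp vq.
have vip : valid_pos (Node ts) (i :: p) by rewrite /= hi vp.
have viq : valid_pos (Node ts) (i :: q) by rewrite /= hi vq.
split=> h.
  have : adj (i :: p) (i :: q) by apply/adj_cons.
  by move/(h4 _ _ vip viq).1; rewrite (fh _ vp) (fh _ vq) => /adj_cons [].
have : adj (f (i :: p)) (f (i :: q)) by rewrite (fh _ vp) (fh _ vq); apply/adj_cons.
by move/(h4 _ _ vip viq).2 => /adj_cons [].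
Qed.

Lemma In_nth ts i : (i < size ts)%N -> List.In (ch ts i) ts.
Proof. by elim: ts i => [|c ts IH] [|i] //= hi; [left|right; apply: IH]. Qed.

Lemma sig_map_uniq ts us f g : isoP (Node ts) (Node us) f g ->
  uniq (map (sig_of f) (iota 0 (size ts))) /\
  {subset map (sig_of f) (iota 0 (size ts)) <= iota 0 (size us)}.
Proof.
move=> hI; split.
  rewrite map_inj_in_uniq ?iota_uniq // => i j; rewrite !mem_iota !add0n.
  by move=> /andP [_ hi] /andP [_ hj]; exact: sig_inj hI i j hi hj.
move=> j /mapP [i]; rewrite !mem_iota !add0n => /andP [_ hi] ->; rewrite leq0n /=.
exact: (iso_one hI hi).2.
Qed.

Lemma iso_size_eq ts us f g : isoP (Node ts) (Node us) f g -> size ts = size us.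
Proof.
move=> hI; have hI' := isoP_sym hI.
have [u1 s1] := sig_map_uniq hI; have [u2 s2] := sig_map_uniq hI'.
have := uniq_leq_size u1 s1; have := uniq_leq_size u2 s2.
rewrite !size_map !size_iota; lia.
Qed.

Lemma perm_from_iso (A : eqType) (F : rtree -> A) ts us f g :
  isoP (Node ts) (Node us) f g ->
  (forall i, (i < size ts)%N -> F (ch ts i) = F (ch us (sig_of f i))) ->
  perm_eq (map F ts) (map F us).
Proof.
move=> hI H; have ne := iso_size_eq hI.
have [u1 s1] := sig_map_uniq hI.
have -> : map F ts = map (fun j => F (ch us j)) (map (sig_of f) (iota 0 (size ts))).
  rewrite -map_comp -{1}(mkseq_nth (Node [::]) ts) /mkseq -map_comp.
  apply/eq_in_map => i; rewrite mem_iota add0n => /andP [_ hi]; exact: H.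
have E : map (fun j => F (ch us j)) (iota 0 (size us)) = map F us.
  by rewrite -[in RHS](mkseq_nth (Node [::]) us) /mkseq -map_comp.
rewrite -E.
apply: perm_map; apply: uniq_perm => //; first exact: iota_uniq.
have := uniq_min_size u1 s1; rewrite size_map !size_iota ne => /(_ (leqnn _)) [].
done.
Qed.

Lemma iso_C : forall T U f g, isoP T U f g -> Cpoly T = Cpoly U.
Proof.
elim/rtree_ind' => ts IH [us] f g hI.
have hp : perm_eq (map Cpoly ts) (map Cpoly us).
  apply: (perm_from_iso hI) => i hi.
  exact: (IH _ (In_nth hi) _ _ _ (iso_child hI hi)).
have hr : perm_eq (map rsize ts) (map rsize us).
  have e : forall l, map rsize l = map (fun p => (size (pbar p)).-1) (map Cpoly l).
    by move=> l; rewrite -map_comp; apply: eq_map => c /=; rewrite pbar_C size_polyXn.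
  by rewrite !e; apply: perm_map.
case: ts us IH hI hp hr => [|c ts] [|d us] IH hI hp hr //.
- by have := perm_size hp.
- by have := perm_size hp.
rewrite [LHS]CpolyE [RHS]CpolyE !rsizeE (perm_sumn hr).
by rewrite -!(big_map Cpoly predT id) (perm_big _ hp).
Qed.

Lemma finite_choice (P : nat -> (seq nat -> seq nat) -> (seq nat -> seq nat) -> Prop) n :
  (forall i, (i < n)%N -> exists f g, P i f g) ->
  exists F G, forall i, (i < n)%N -> P i (F i) (G i).
Proof.
elim: n => [|n IH] H; first by exists (fun _ => id), (fun _ => id).
have [F [G HFG]] := IH (fun i hi => H i (ltnW hi)).
have [f [g hfg]] := H n (ltnSn n).
exists (fun i => if i == n then f else F i), (fun i => if i == n then g else G i).
move=> i; rewrite ltnS leq_eqVlt => /orP [/eqP ->|hi]; first by rewrite eqxx.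
by rewrite (ltn_eqF hi); apply: HFG.
Qed.

Lemma iso_node ts us (Is : seq nat) :
  size ts = size us -> perm_eq Is (iota 0 (size us)) ->
  (forall i, (i < size ts)%N -> exists f g, isoP (ch ts i) (ch us (nth 0%N Is i)) f g) ->
  exists f g, isoP (Node ts) (Node us) f g.
Proof.
move=> ne hp H.
have [F [G HFG]] := finite_choice H.
set n := size us in hp; rewrite -/n in ne.
have sI : size Is = n by rewrite (perm_size hp) size_iota.
have uI : uniq Is by rewrite (perm_uniq hp) iota_uniq.
have memI : forall j, (j \in Is) = (j < n)%N.
  by move=> j; rewrite (perm_mem hp) mem_iota add0n.
pose s i := nth 0%N Is i; pose t j := index j Is.
have s_lt : forall i, (i < n)%N -> (s i < n)%N by move=> i hi; rewrite -memI mem_nth ?sI.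
have ts_ : forall i, (i < n)%N -> t (s i) = i by move=> i hi; rewrite /t /s index_uniq ?sI.
have t_lt : forall j, (j < n)%N -> (t j < n)%N by move=> j hj; rewrite /t -sI index_mem memI.
have st_ : forall j, (j < n)%N -> s (t j) = j by move=> j hj; rewrite /s /t nth_index ?memI.
pose f p := if p is i :: p' then s i :: F i p' else [::].
pose g q := if q is j :: q' then t j :: G (t j) q' else [::].
exists f, g.
have Gnil : forall i, (i < n)%N -> G i [::] = [::].
  by move=> i hi; apply: (isoP_gnil (HFG i _)); rewrite ne.
have Fnil : forall i, (i < n)%N -> F i [::] = [::].
  by move=> i hi; have [_ [_ [h _]]] := HFG i ltac:(by rewrite ne).
have Fnil' : forall i p, (i < n)%N -> valid_pos (ch ts i) p -> F i p = [::] -> p = [::].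
  move=> i p hi vp e; have [h1 _] := HFG i ltac:(by rewrite ne).
  by have [_ <-] := h1 p vp; rewrite e Gnil.
split.
  case=> [|i p] //= /andP [hi vp]; rewrite ne in hi.
  have [h1 _] := HFG i ltac:(by rewrite ne).
  have [v e] := h1 p vp.
  by rewrite s_lt //= v ts_ // e.
split.
  case=> [|j q] //= /andP [hj vq].
  have hi := t_lt j hj.
  have [_ [h2 _]] := HFG (t j) ltac:(by rewrite ne).
  have e0 := st_ j hj; rewrite /s /t in e0; rewrite e0 in h2.
  have [v e] := h2 q vq.
  by rewrite ne hi /= v st_ // e.
split; first by [].
case=> [|i p] [|j q] //=.
- move=> _ /andP [hj vq]; rewrite ne in hj.
  rewrite !adj_nil_cons; split => [->|/(Fnil' _ _ hj vq) //]; exact: Fnil.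
- move=> /andP [hi vp] _; rewrite ne in hi.
  rewrite !adj_cons_nil; split => [->|/(Fnil' _ _ hi vp) //]; exact: Fnil.
move=> /andP [hi vp] /andP [hj vq]; rewrite ne in hi hj.
rewrite !adj_cons; split.
  case=> eij; subst j; split => //.
  have [_ [_ [_ h4]]] := HFG i ltac:(by rewrite ne).
  exact: (h4 _ _ vp vq).1.
case=> eij; have eij' : i = j by rewrite -(ts_ i hi) -(ts_ j hj) eij.
subst j; split => //.
have [_ [_ [_ h4]]] := HFG i ltac:(by rewrite ne).
exact: (h4 _ _ vp vq).2.
Qed.

Lemma in_mapC q (l : seq rtree) : q \in map Cpoly l -> exists x, q = Cpoly x.
Proof.
elim: l => //= x l IH; rewrite inE => /orP [/eqP ->|/IH //]; by exists x.
Qed.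

Lemma rsize_gt0 t : (0 < rsize t)%N.
Proof. by case: t => ts; rewrite rsizeE. Qed.

Lemma C_iso : forall T U, Cpoly T = Cpoly U -> exists f g, isoP T U f g.
Proof.
elim/rtree_ind' => ts IH [us] E.
have rs : rsize (Node ts) = rsize (Node us).
  have := congr1 pbar E; rewrite !pbar_C => e.
  have h := congr1 (fun p : {poly 'F_2} => size p) e; rewrite !size_polyXn in h; exact: succn_inj h.
case: ts us IH E rs => [|c ts] [|d us] IH E rs.
- by apply: (@iso_node [::] [::] [::]).
- by move: rs; rewrite !rsizeE /=; have := rsize_gt0 d; lia.
- by move: rs; rewrite !rsizeE /=; have := rsize_gt0 c; lia.
move: E; rewrite [Cpoly (Node (c :: ts))]CpolyE [Cpoly (Node (d :: us))]CpolyE rs.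
move=> /addIr /addrI E.
have nz : (2%:P * 'X : {poly int}) != 0.
  by rewrite mulf_neq0 ?polyX_eq0 // polyC_eq0.
have {}E := mulfI nz E.
have hp : perm_eq (map Cpoly (c :: ts)) (map Cpoly (d :: us)).
  apply: UF_int; last by rewrite !big_map.
  by move=> q; rewrite mem_cat => /orP [] /in_mapC [x ->]; exists (rsize x); apply: Eis_C.
have ne := perm_size hp; rewrite !size_map in ne.
have [Is hI hm] := perm_iotaP 0 hp.
rewrite size_map in hI.
apply: (iso_node ne hI) => i hi.
have hIi : (nth 0%N Is i < size (d :: us))%N.
  have hs : size Is = size (d :: us) by rewrite (perm_size hI) size_iota.
  have : nth 0%N Is i \in iota 0 (size (d :: us)) by rewrite -(perm_mem hI) mem_nth // hs -ne.
  by rewrite mem_iota add0n.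
apply: IH; first exact: In_nth.
have e1 : nth 0 (map Cpoly (c :: ts)) i = Cpoly (ch (c :: ts) i) := nth_map _ _ _ hi.
have e2 : nth 0 (map Cpoly (d :: us)) (nth 0%N Is i) = Cpoly (ch (d :: us) (nth 0%N Is i)) :=
  nth_map _ _ _ hIi.
have hs : (i < size Is)%N by rewrite (perm_size hI) size_iota -ne.
rewrite -e1 -e2 hm (nth_map 0%N) //.
Qed.

Theorem mainTheorem3 (T T' : rtree) : Cpoly T = Cpoly T' <-> rtree_iso T T'.
Proof.
split; first by move/C_iso => [f [g h]]; exists f, g.
by move=> [f [g h]]; apply: (iso_C h).
Qed.
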